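(* Let $f:\mathbb{R}^n\to(-\infty,+\infty]$ be proper, lower semicontinuous and prox-bounded with threshold $\lambda_f>0$, and let $0<\lambda<\lambda_f$. Then the following are equivalent: (a) $P_\lambda f$ is firmly nonexpansive on $\mathbb{R}^n$; (b) $\partial_p^\lambda f$ is monotone; (c) $\partial_p^\lambda f$ is maximally monotone; (d) $e_\lambda f$ is convex on $\mathbb{R}^n$; (e) $f$ is convex on $\mathbb{R}^n$.
   Context: $e_\lambda f(x):=\inf_{y}\{f(y)+\frac1{2\lambda}\|y-x\|^2\}$, $P_\lambda f(x):=\operatorname{argmin}_y\{f(y)+\frac1{2\lambda}\|y-x\|^2\}$ (set-valued; firm nonexpansiveness entails single-valuedness: $\|Tx-Ty\|^2\le\langle x-y,Tx-Ty\rangle$). Prox-bounded: $e_\lambda f(x)>-\infty$ for some $\lambda>0,x$; threshold $\lambda_f$ = supremum of such $\lambda$. $v\in\partial_p^\lambda f(x)$ iff $x\in\operatorname{dom}f$ and $f(y)\ge f(x)+\langle v,y-x\rangle-\frac1{2\lambda}\|y-x\|^2$ for all $y\in\mathbb{R}^n$. *)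

(* Defs.v *)
(* R : realType, points of R^n are row vectors 'rV[R]_n
   (with the product topology = Euclidean topology), extended-real values \bar R. *)
From HB Require Import structures.
From mathcomp Require Import all_boot all_order all_algebra.
From mathcomp Require Import all_classical all_reals all_analysis.
Import numFieldTopology.Exports numFieldNormedType.Exports.
Set Implicit Arguments. Unset Strict Implicit. Unset Printing Implicit Defensive.
Import Order.TTheory GRing.Theory Num.Theory.
Local Open Scope classical_set_scope.
Local Open Scope ring_scope.

Section Defs.
Variables (R : realType) (n : nat).
Notation V := 'rV[R]_n.

Definition dotv (x y : V) : R := \sum_(i < n) x ord0 i * y ord0 i.
Definition sqnorm (x : V) : R := dotv x x.

Definition proper_fun (f : V -> \bar R) : Prop :=
  (forall x, f x != -oo%E) /\ (exists x, f x != +oo%E).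

Definition lsc (f : V -> \bar R) : Prop :=
  forall x (a : R), (a%:E < f x)%E -> \forall y \near x, (a%:E < f y)%E.

Definition moreau_env (l : R) (f : V -> \bar R) (x : V) : \bar R :=
  ereal_inf [set (f y + ((2 * l)^-1 * sqnorm (y - x))%:E)%E | y in [set: V]].

Definition prox_map (l : R) (f : V -> \bar R) (x : V) : set V :=
  [set y | forall z, (f y + ((2 * l)^-1 * sqnorm (y - x))%:E
                      <= f z + ((2 * l)^-1 * sqnorm (z - x))%:E)%E].

Definition prox_bounded (f : V -> \bar R) : Prop :=
  exists (l : R) (x : V), 0 < l /\ (-oo < moreau_env l f x)%E.

Definition prox_threshold (f : V -> \bar R) : \bar R :=
  ereal_sup [set l%:E | l in [set l : R | 0 < l /\ exists x, (-oo < moreau_env l f x)%E]].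

Definition prox_subdiff (l : R) (f : V -> \bar R) (x : V) : set V :=
  [set v | f x \is a fin_num /\
     forall y, (f x + (dotv v (y - x) - (2 * l)^-1 * sqnorm (y - x))%:E <= f y)%E].

Definition firmly_nonexpansive (T : V -> set V) : Prop :=
  forall x y u v, T x u -> T y v -> sqnorm (u - v) <= dotv (x - y) (u - v).

Definition monotone_op (T : V -> set V) : Prop :=
  forall x y u v, T x u -> T y v -> 0 <= dotv (u - v) (x - y).

Definition maximally_monotone (T : V -> set V) : Prop :=
  monotone_op T /\
  forall S : V -> set V, monotone_op S -> (forall x, T x `<=` S x) ->
    forall x, S x = T x.

Definition convex_fun (f : V -> \bar R) : Prop :=
  forall (x y : V) (t : R), 0 < t < 1 ->
    (f (t *: x + (1 - t) *: y)%R <= t%:E * f x + (1 - t)%:E * f y)%E.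

End Defs.

(* Main.v *)
Require Import Defs.
From HB Require Import structures.
From mathcomp Require Import all_boot all_order all_algebra.
From mathcomp Require Import all_classical all_reals all_analysis.
From mathcomp Require Import ring lra.
Import Order.TTheory GRing.Theory Num.Theory.
Import numFieldTopology.Exports numFieldNormedType.Exports.
Local Open Scope classical_set_scope.
Local Open Scope ring_scope.
Set Implicit Arguments. Unset Strict Implicit. Unset Printing Implicit Defensive.

Section Alg.
Variables (R : realType) (n : nat).
Notation V := 'rV[R]_n.
Implicit Types x y z : V.

Lemma dotvC x y : dotv x y = dotv y x.
Proof. by rewrite /dotv; apply: eq_bigr => i _; rewrite mulrC. Qed.

Lemma dotvDl x y z : dotv (x + y) z = dotv x z + dotv y z.
Proof. by rewrite /dotv -big_split; apply: eq_bigr => i _; rewrite mxE mulrDl. Qed.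

Lemma dotvZl (a : R) x y : dotv (a *: x) y = a * dotv x y.
Proof. by rewrite /dotv mulr_sumr; apply: eq_bigr => i _; rewrite mxE mulrA. Qed.

Lemma dotvNl x y : dotv (- x) y = - dotv x y.
Proof. by rewrite -scaleN1r dotvZl mulN1r. Qed.

Lemma dotvBl x y z : dotv (x - y) z = dotv x z - dotv y z.
Proof. by rewrite dotvDl dotvNl. Qed.

Lemma dotvDr x y z : dotv z (x + y) = dotv z x + dotv z y.
Proof. by rewrite dotvC dotvDl !(dotvC z). Qed.
Lemma dotvZr (a : R) x y : dotv y (a *: x) = a * dotv y x.
Proof. by rewrite dotvC dotvZl dotvC. Qed.
Lemma dotvNr x y : dotv y (- x) = - dotv y x.
Proof. by rewrite dotvC dotvNl dotvC. Qed.
Lemma dotvBr x y z : dotv z (x - y) = dotv z x - dotv z y.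
Proof. by rewrite dotvDr dotvNr. Qed.
Lemma dotv0l x : dotv 0 x = 0.
Proof. by rewrite -(scale0r 0) dotvZl mul0r. Qed.
Lemma dotv0r x : dotv x 0 = 0.
Proof. by rewrite dotvC dotv0l. Qed.

Lemma sqnorm_ge0 x : 0 <= sqnorm x.
Proof. by rewrite /sqnorm /dotv; apply: sumr_ge0 => i _; rewrite -expr2 sqr_ge0. Qed.

Lemma sqnorm_coord x i : x ord0 i ^+ 2 <= sqnorm x.
Proof.
rewrite /sqnorm /dotv (bigD1 i) //= -expr2 lerDl.
by apply: sumr_ge0 => j _; rewrite -expr2 sqr_ge0.
Qed.

Lemma sqnorm_eq0 x : sqnorm x = 0 -> x = 0.
Proof.
move=> /eqP; rewrite /sqnorm /dotv psumr_eq0; last by move=> i _; rewrite -expr2 sqr_ge0.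
move=> /allP H; apply/rowP => i; rewrite mxE.
by have := H i (mem_index_enum i); rewrite /= mulf_eq0 orbb => /eqP.

Qed.

Lemma sqnormD x y : sqnorm (x + y) = sqnorm x + 2 * dotv x y + sqnorm y.
Proof. rewrite /sqnorm dotvDl !dotvDr (dotvC y x); ring. Qed.

Lemma sqnormN x : sqnorm (- x) = sqnorm x.
Proof. by rewrite /sqnorm dotvNl dotvNr opprK. Qed.

Lemma sqnormB x y : sqnorm (x - y) = sqnorm x - 2 * dotv x y + sqnorm y.
Proof. by rewrite sqnormD dotvNr sqnormN; ring. Qed.

Lemma sqnormZ (a : R) x : sqnorm (a *: x) = a ^+ 2 * sqnorm x.
Proof. by rewrite /sqnorm dotvZl dotvZr; ring. Qed.

Lemma key_id (l : R) x y p : l != 0 ->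
  (2 * l)^-1 * sqnorm (y - x) - (2 * l)^-1 * sqnorm (p - x) =
  (2 * l)^-1 * sqnorm (y - p) - dotv (l^-1 *: (x - p)) (y - p).
Proof.
move=> l0.
have -> : y - x = (y - p) + (p - x) by rewrite addrA subrK.
have -> : x - p = - (p - x) by rewrite opprB.
rewrite sqnormD dotvZl dotvNl (dotvC (p - x)).
by field.
Qed.
End Alg.

Section Prox.
Variables (R : realType) (n : nat).
Notation V := 'rV[R]_n.
Implicit Types x y z p : V.
Variable g : V -> \bar R.
Hypothesis gnoo : forall z, g z != -oo%E.

Lemma prox_fin l x p z0 : g z0 != +oo%E -> prox_map l g x p -> g p \is a fin_num.
Proof.
move=> hz0 /(_ z0); rewrite fin_numE gnoo /=.
have := gnoo z0; move: hz0.
by case: (g z0) => // r _ _; case: (g p).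
Qed.

Lemma prox_subdiffP l x p z0 : 0 < l -> g z0 != +oo%E -> prox_map l g x p ->
  prox_subdiff l g p (l^-1 *: (x - p)).
Proof.
move=> l0 hz0 Hp; have gpf := prox_fin hz0 Hp; split => // y.
have := Hp y; have := gnoo y.
move: gpf; case: (g p) => // a _; case: (g y) => // [b _|_ _]; last by rewrite leey.
rewrite -!EFinD !lee_fin => H.
have := key_id x y p (lt0r_neq0 l0); lra.
Qed.

Lemma subdiff_proxP l p v : 0 < l -> prox_subdiff l g p v -> prox_map l g (p + l *: v) p.
Proof.
move=> l0 [gpf Hv] y.
have := Hv y; have := gnoo y.
move: gpf; case: (g p) => // a _; case: (g y) => // [b _|_ _]; last by rewrite leey.
rewrite -!EFinD !lee_fin => H.
have := key_id (p + l *: v) y p (lt0r_neq0 l0).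
rewrite (addrC p) addrK scalerA mulVf ?lt0r_neq0 // scale1r => E.
lra.
Qed.
End Prox.

Section AB.
Variables (R : realType) (n : nat).
Notation V := 'rV[R]_n.
Variable g : V -> \bar R.
Hypothesis gnoo : forall z, g z != -oo%E.
Variable l : R.
Hypothesis l0 : 0 < l.

Lemma fne_mono : firmly_nonexpansive (prox_map l g) -> monotone_op (prox_subdiff l g).
Proof.
move=> H x y u v hu hv.
have := H _ _ _ _ (subdiff_proxP gnoo l0 hu) (subdiff_proxP gnoo l0 hv).
have -> : x + l *: u - (y + l *: v) = (x - y) + l *: (u - v).
  by apply/rowP => i; rewrite !mxE; ring.
rewrite dotvDl dotvZl /sqnorm lerDl pmulr_rge0 //.
Qed.

Lemma mono_fne z0 : g z0 != +oo%E ->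
  monotone_op (prox_subdiff l g) -> firmly_nonexpansive (prox_map l g).
Proof.
move=> hz0 H x y u v hu hv.
have := H _ _ _ _ (prox_subdiffP gnoo l0 hz0 hu) (prox_subdiffP gnoo l0 hz0 hv).
rewrite -scalerBr dotvZl pmulr_rge0 ?invr_gt0 //.
have -> : x - u - (y - v) = (x - y) - (u - v).
  by apply/rowP => i; rewrite !mxE; ring.
by rewrite dotvBl subr_ge0.
Qed.
End AB.

Lemma lim_t_le (R : realType) (A B K : R) : 0 <= K ->
  (forall t, 0 < t < 1 -> A - t * K <= B) -> A <= B.
Proof.
move=> K0 H; rewrite leNgt; apply/negP => AB.
have D0 : 0 < A - B by rewrite subr_gt0.
pose t := (A - B) / (A - B + K + 1).
have den0 : 0 < A - B + K + 1 by lra.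
have t0 : 0 < t by rewrite divr_gt0.
have t1 : t < 1 by rewrite ltr_pdivrMr // mul1r; lra.
have := H t (andb_true_intro (conj t0 t1)).
have : t * (A - B + K + 1) = A - B by rewrite /t mulrAC -mulrA divff ?mulr1 // gt_eqF.
nra.
Qed.

Section ConvSub.
Variables (R : realType) (n : nat).
Notation V := 'rV[R]_n.
Variable g : V -> \bar R.
Hypothesis gnoo : forall z, g z != -oo%E.
Hypothesis gconv : convex_fun g.

Lemma convex_subgrad mu y v : 0 < mu -> prox_subdiff mu g y v ->
  forall z, (g y + (dotv v (z - y))%:E <= g z)%E.
Proof.
move=> mu0 [gyf Hv] z.
move: gyf; case Ey: (g y) => [a| |] // _.
have := gnoo z; case Ez: (g z) => [b| |] // _; last by rewrite leey.
rewrite -EFinD lee_fin.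
apply: (@lim_t_le _ _ _ ((2 * mu)^-1 * sqnorm (z - y))).
  by rewrite mulr_ge0 ?sqnorm_ge0 // invr_ge0 mulr_ge0 // ltW.
move=> t /andP[t0 t1].
have := Hv (t *: z + (1 - t) *: y); have := gconv z y (andb_true_intro (conj t0 t1)).
have -> : t *: z + (1 - t) *: y - y = t *: (z - y) by apply/rowP => i; rewrite !mxE; ring.
rewrite Ey Ez sqnormZ dotvZr.
have := gnoo (t *: z + (1 - t) *: y).
case: (g _) => [c| |] //= _; rewrite -?EFinM -?EFinD ?lee_fin => H1 H2.
have : a + (t * dotv v (z - y) - (2 * mu)^-1 * (t ^+ 2 * sqnorm (z - y))) <= t * b + (1 - t) * a by lra.
move=> H3.
have : t * (dotv v (z - y) - t * ((2 * mu)^-1 * sqnorm (z - y))) <= t * (b - a).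
  by lra.
by rewrite ler_pM2l //; lra.
Qed.

Lemma conv_mono mu : 0 < mu -> monotone_op (prox_subdiff mu g).
Proof.
move=> mu0 x y u v hu hv.
have h1 := convex_subgrad mu0 hu y; have h2 := convex_subgrad mu0 hv x.
case: hu => + _; case: hv => + _.
move: h1 h2; case: (g x) => // a; case: (g y) => // b.
rewrite -!EFinD !lee_fin => h1 h2 _ _.
have : dotv u (y - x) + dotv v (x - y) <= 0 by lra.
have -> : y - x = - (x - y) by rewrite opprB.
by rewrite dotvNr dotvBl; lra.
Qed.
End ConvSub.

Lemma ereal_dense (R : realType) (u v : \bar R) : (u < v)%E ->
  exists r : R, (u < r%:E)%E /\ (r%:E < v)%E.
Proof.
case: u => [x| |]; case: v => [y| |] //=; rewrite ?lte_fin => h.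
- exists ((x + y) / 2); rewrite !lte_fin; split; lra.
- by exists (x + 1); rewrite !lte_fin ltey; split => //; lra.
- by exists (y - 1); rewrite !lte_fin ltNye; split => //; lra.
- by exists 0; rewrite ltey ltNye.
Qed.

Lemma lsc_compact_min (R : realType) (T : topologicalType) (phi : T -> \bar R) (K : set T) y0 :
  compact K -> K y0 ->
  (forall x (a : R), (a%:E < phi x)%E -> \forall y \near x, (a%:E < phi y)%E) ->
  exists2 p, K p & forall y, K y -> (phi p <= phi y)%E.
Proof.
move=> cK Ky0 lscp.
pose m := ereal_inf (phi @` K).
have [[p Kp pm]|nomin] := pselect (exists2 p, K p & (phi p <= m)%E).
  exists p => // y Ky; apply: le_trans pm _; apply: ereal_inf_lbound; by exists y.
have mlt : forall p, K p -> (m < phi p)%E.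
  move=> p Kp; rewrite lt_neqAle ereal_inf_lbound; last by exists p.
  rewrite andbT; apply/negP => /eqP E; apply: nomin; exists p => //; by rewrite E.
pose B := fun a : R => [set y | K y /\ (phi y < a%:E)%E].
pose D := [set a : R | (m < a%:E)%E].
have FF : Filter (filter_from D B).
  apply: filter_from_filter.
    have [r [hr _]] := ereal_dense (mlt _ Ky0); by exists r.
  move=> i j Di Dj; exists (Num.min i j).
    by rewrite /D /= EFin_min lt_min; apply/andP.
  move=> y [Ky]; rewrite EFin_min lt_min => /andP[h1 h2]; split; by split.
have PF : ProperFilter (filter_from D B).
  apply: filter_from_proper => // a Da.
  have [_ [y Ky <-] ya] := ereal_inf_lt Da; by exists y.
have [p [Kp clp]] := cK _ PF (ltac:(have [r [hr _]] := ereal_dense (mlt _ Ky0); by exists r => // y [])).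
have [a [ma ap]] := ereal_dense (mlt _ Kp).
have [y [[_ ya] ay]] := clp (B a) _ (ltac:(by exists a)) (lscp _ _ ap).
by move: (lt_trans ay ya); rewrite ltxx.
Qed.

Lemma sq_le_bound (R : realType) (d r2 : R) : 0 <= r2 -> d ^+ 2 <= r2 -> - (r2 + 1) <= d <= r2 + 1.
Proof.
move=> r0 h; rewrite -ler_norml.
case: (leP `|d| 1) => h1; first lra.
have : `|d| <= `|d| ^+ 2 by rewrite expr2 ler_peMr // ltW.
rewrite real_normK ?num_real //; lra.
Qed.

Section Cont.
Variables (R : realType) (n : nat).
Notation V := 'rV[R]_n.

Lemma sqnorm_cont (x : V) : continuous (fun y : V => sqnorm (y - x)).
Proof.
rewrite /sqnorm /dotv.
apply: continuous_big; first exact: add_continuous.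
move=> i _ z.
have hc : {for z, continuous (fun y : V => (y - x) ord0 i)}.
  have -> : (fun y : V => (y - x) ord0 i) = (fun y => y ord0 i - x ord0 i).
    by apply/funext => y; rewrite !mxE.
  apply: (@continuousB _ _ _ (fun y : V => y ord0 i) (fun _ => x ord0 i)).
    exact: coord_continuous.
  exact: cst_continuous.
exact: continuousM.
Qed.

Lemma lsc_addq (g : V -> \bar R) (h : V -> R) :
  lsc g -> continuous h -> lsc (fun y => (g y + (h y)%:E)%E).
Proof.
move=> lg ch x a H.
have H' : ((a - h x)%:E < g x)%E.
  move: H; case: (g x) => // [r|] Hr; last by rewrite ltey.
  by move: Hr; rewrite -EFinD !lte_fin; lra.
have [r [h1 h2]] := ereal_dense H'.
rewrite lte_fin in h1.
have N1 := lg x r h2.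
have N2 := @cvgr_gt _ _ _ _ h (h x) (ch x) (a - r) (ltac:(lra)).
near=> y.
have n1 : (r%:E < g y)%E by near: y.
have n2 : a - r < h y by near: y; apply: N2; lra.
move: n1; case: (g y) => // [s|] n1; last by rewrite /= ltey.
by rewrite -EFinD lte_fin; rewrite lte_fin in n1; lra.
Unshelve. all: end_near.
Qed.

Lemma quad_bound (x x0 y : V) (al be : R) : 0 < be -> be < al ->
  be * sqnorm (y - x0) <= (al + be) / 2 * sqnorm (y - x) +
     (be + 2 * be ^+ 2 / (al - be)) * sqnorm (x - x0).
Proof.
move=> b0 ba.
have -> : y - x0 = (y - x) + (x - x0) by rewrite addrA subrK.
set a := y - x; set b := x - x0.
pose e := (al - be) / (2 * be).
have e0 : 0 < e by rewrite /e divr_gt0 // ?subr_gt0 // mulr_gt0.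
have E1 := sqnorm_ge0 (e *: a - b).
rewrite sqnormB sqnormZ dotvZl in E1.
have E2 : 0 <= (be / e) * (e ^+ 2 * sqnorm a - 2 * (e * dotv a b) + sqnorm b).
  by rewrite mulr_ge0 // divr_ge0 // ltW.
have id : (be / e) * (e ^+ 2 * sqnorm a - 2 * (e * dotv a b) + sqnorm b) =
   (al - be) / 2 * sqnorm a - 2 * be * dotv a b + 2 * be ^+ 2 / (al - be) * sqnorm b.
  rewrite /e; field.
  by apply/andP; split; rewrite ?subr_eq0 ?gt_eqF // lt_gtF.
rewrite sqnormD.
rewrite id in E2.
lra.
Qed.

Lemma prox_exists (g : V -> \bar R) (x0 : V) (c l' mu : R) z0 :
  lsc g -> g z0 != +oo%E ->
  (forall y, ((c - (2 * l')^-1 * sqnorm (y - x0))%:E <= g y)%E) ->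
  0 < mu -> mu < l' ->
  forall x, exists p, prox_map mu g x p.
Proof.
move=> lg gz0 glb mu0 mul x.
pose h := fun y : V => (2 * mu)^-1 * sqnorm (y - x).
pose phi := fun y => (g y + (h y)%:E)%E.
have lphi : lsc phi.
  apply: lsc_addq => // y; exact: (@continuousM _ _ (cst ((2 * mu)^-1)) (fun y : V => sqnorm (y - x)) y (@cst_continuous _ _ _ y) (@sqnorm_cont x y)).
have l'0 : 0 < l' by apply: lt_trans mul.
set al := (2 * mu)^-1; set be := (2 * l')^-1.
have be0 : 0 < be by rewrite invr_gt0 mulr_gt0.
have ba : be < al by rewrite ltf_pV2 ?posrE ?mulr_gt0 // ltr_pM2l.
have := glb z0; move: gz0; case Eb: (g z0) => [b| |] // _ _.
pose M := b + h z0.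
pose r2 := 2 / (al - be) * (M - c + (be + 2 * be ^+ 2 / (al - be)) * sqnorm (x - x0)).
have bnd : forall y, (phi y <= M%:E)%E -> sqnorm (y - x) <= r2.
  move=> y; rewrite /phi; have := glb y; case: (g y) => [s| |] //=.
    rewrite -EFinD !lee_fin /h -/al => h1 h2.
    have := quad_bound x x0 y be0 ba.
    have ab0 : 0 < al - be by rewrite subr_gt0.
    rewrite -/be in h1 => Q.
    rewrite /r2; set W := (M - c + _).
    have HW : (al - be) / 2 * sqnorm (y - x) <= W by rewrite /W; lra.
    have -> : sqnorm (y - x) = 2 / (al - be) * ((al - be) / 2 * sqnorm (y - x)).
      by field; rewrite gt_eqF.
    by rewrite ler_wpM2l // divr_ge0 // ltW.
pose r := r2 + 1.
pose K := [set y : V | forall i, `[x ord0 i - r, x ord0 i + r]%classic (y ord0 i)].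
have cK : compact K.
  by apply: (@rV_compact _ _ (fun i => `[x ord0 i - r, x ord0 i + r]%classic)) => i; exact: segment_compact.
have inK : forall y, (phi y <= M%:E)%E -> K y.
  move=> y /bnd hy i /=; rewrite in_itv /=.
  have := sqnorm_coord (y - x) i; rewrite !mxE => hc.
  have r20 : 0 <= r2 by apply: le_trans hy; exact: sqnorm_ge0.
  have := sq_le_bound r20 (le_trans hc hy).
  rewrite /r => /andP[h1 h2]; apply/andP; split; lra.
have phiz0 : phi z0 = M%:E by rewrite /phi Eb.
have Kz0 : K z0 by apply: inK; rewrite phiz0.
have [p Kp pmin] := lsc_compact_min cK Kz0 lphi.
exists p => z.
have [/inK Kz|] := boolP (phi z <= M%:E)%E; first exact: pmin.
rewrite -ltNge => Mz; apply/ltW; apply: le_lt_trans Mz.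
by rewrite -phiz0; apply: pmin; apply: inK; rewrite phiz0.
Qed.
End Cont.

Section Env.
Variables (R : realType) (n : nat).
Notation V := 'rV[R]_n.
Variable f : V -> \bar R.
Hypothesis fnoo : forall z, f z != -oo%E.
Variable z0 : V.
Hypothesis fz0 : f z0 != +oo%E.
Variable l : R.
Hypothesis l0 : 0 < l.
Hypothesis Hex : forall x, exists p, prox_map l f x p.

Lemma env_at x p : prox_map l f x p ->
  moreau_env l f x = (f p + ((2 * l)^-1 * sqnorm (p - x))%:E)%E.
Proof.
move=> Hp; apply/eqP; rewrite eq_le; apply/andP; split.
  by apply: ereal_inf_lbound; exists p.
by apply: le_ereal_inf_tmp => _ [y _ <-]; exact: Hp.
Qed.

Definition Ev x := fine (moreau_env l f x).

Lemma EvE x p : prox_map l f x p ->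
  Ev x = fine (f p) + (2 * l)^-1 * sqnorm (p - x).
Proof.
move=> Hp; rewrite /Ev (env_at Hp).
have := prox_fin fnoo fz0 Hp; case: (f p) => // r _.
Qed.

Lemma env_fin x : moreau_env l f x = (Ev x)%:E.
Proof.
have [p Hp] := Hex x; rewrite (env_at Hp) (EvE Hp).
have := prox_fin fnoo fz0 Hp; case: (f p) => // r _.
Qed.

Lemma Ev_le x y : ((Ev x)%:E <= f y + ((2 * l)^-1 * sqnorm (y - x))%:E)%E.
Proof. rewrite -env_fin; apply: ereal_inf_lbound; by exists y. Qed.


Section Mono.
Hypothesis Hmono : monotone_op (prox_subdiff l f).

Lemma step z w (tau delta : R) p0 pt : 0 < tau -> 0 <= delta ->
  prox_map l f z p0 -> prox_map l f (z + tau *: w) pt ->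
  delta * dotv (l^-1 *: (z - p0)) w - delta ^+ 2 * ((2 * l)^-1 * sqnorm w)
  <= Ev (z + tau *: w) - Ev (z + (tau - delta) *: w).
Proof.
move=> t0 d0 H0 Ht.
set zt := z + tau *: w; set G0 := l^-1 *: (z - p0); set Gt := l^-1 *: (zt - pt).
have h0 : prox_subdiff l f p0 G0 := prox_subdiffP fnoo l0 fz0 H0.
have ht : prox_subdiff l f pt Gt := prox_subdiffP fnoo l0 fz0 Ht.
have m := Hmono ht h0.
have ln0 : l != 0 by rewrite gt_eqF.
have id1 : tau *: w = (pt - p0) + l *: (Gt - G0).
  by apply/rowP => i; rewrite /Gt /G0 /zt !mxE; field.
have mw : 0 <= dotv (Gt - G0) w.
  have : 0 <= dotv (Gt - G0) (tau *: w).
    rewrite id1 dotvDr dotvZr addr_ge0 // mulr_ge0 //; [exact: ltW | exact: (sqnorm_ge0 (Gt - G0))].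
  by rewrite dotvZr pmulr_rge0.
have E1 := EvE Ht.
have E2 := Ev_le (z + (tau - delta) *: w) pt.
have fpt := prox_fin fnoo fz0 Ht.
move: E2; rewrite -(fineK fpt) -EFinD lee_fin => E2.
have id2 : pt - (z + (tau - delta) *: w) = (pt - zt) + delta *: w.
  by apply/rowP => i; rewrite /zt !mxE; ring.
have id3 : pt - zt = - (l *: Gt).
  by apply/rowP => i; rewrite /Gt !mxE; field.
have id4 : dotv (pt - zt) w = - (l * dotv Gt w) by rewrite id3 dotvNl dotvZl.
rewrite id2 sqnormD dotvZr id4 sqnormZ in E2.
rewrite -/zt E1 -/zt.
rewrite dotvBl in mw.
have M1 : delta * dotv G0 w <= delta * dotv Gt w by rewrite ler_wpM2l //; lra.
have F1 : (2 * l)^-1 * (2 * (delta * - (l * dotv Gt w))) = - (delta * dotv Gt w).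
  by field.
have F2 : (2 * l)^-1 * (delta ^+ 2 * sqnorm w) = delta ^+ 2 * ((2 * l)^-1 * sqnorm w).
  by ring.
lra.
Qed.
End Mono.

Section Mono2.
Hypothesis Hmono : monotone_op (prox_subdiff l f).

Lemma subdiv z w p0 (N : nat) : (0 < N)%N -> prox_map l f z p0 ->
  forall k, (k <= N)%N ->
  k%:R * N%:R^-1 * dotv (l^-1 *: (z - p0)) w - k%:R * (N%:R^-1) ^+ 2 * ((2 * l)^-1 * sqnorm w)
  <= Ev (z + (k%:R * N%:R^-1) *: w) - Ev z.
Proof.
move=> N0 H0; elim => [|k IH] kN.
  by rewrite !mul0r scale0r addr0 subrr subr0.
have IH' := IH (ltnW kN).
have Nr : 0 < N%:R :> R by rewrite ltr0n.
have t0 : 0 < k.+1%:R * N%:R^-1 :> R by rewrite mulr_gt0 ?invr_gt0 // ltr0n.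
have [pt Ht] := Hex (z + (k.+1%:R * N%:R^-1) *: w).
have u0 : 0 < N%:R^-1 :> R by rewrite invr_gt0.
have S := step Hmono t0 (ltW u0) H0 Ht.
have e : k.+1%:R * N%:R^-1 - N%:R^-1 = k%:R * N%:R^-1 :> R by rewrite -natr1; ring.
rewrite e in S.
rewrite -natr1.
move: S IH'; rewrite -natr1.
set A := dotv _ w; set C := (2 * l)^-1 * sqnorm w; set u := N%:R^-1.
move=> S IH'.
have : (k%:R + 1) * u * A - (k%:R + 1) * u ^+ 2 * C =
  (k%:R * u * A - k%:R * u ^+ 2 * C) + (u * A - u ^+ 2 * C) by ring.
move=> EE; rewrite EE; move: S; rewrite -[k.+1%:R]natr1; lra.
Qed.

Lemma Ev_subgrad z w p0 : prox_map l f z p0 ->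
  Ev z + dotv (l^-1 *: (z - p0)) w <= Ev (z + w).
Proof.
move=> H0.
set A := dotv _ w; set C := (2 * l)^-1 * sqnorm w.
have C0 : 0 <= C by rewrite /C mulr_ge0 ?sqnorm_ge0 // invr_ge0 mulr_ge0 // ltW.
rewrite leNgt; apply/negP => hlt.
set D := A - (Ev (z + w) - Ev z).
have D0 : 0 < D by rewrite /D; lra.
pose N := (Num.bound (C / D)).+1.
have hN : C / D < N%:R.
  apply: (lt_le_trans (archi_boundP _)); first by rewrite divr_ge0 // ltW.
  by rewrite ler_nat.
have Nr : 0 < N%:R :> R by rewrite ltr0n.
have := subdiv w (N:=N) (ltn0Sn _) H0 (leqnn N).
rewrite divff ?gt_eqF // scale1r mul1r.
have e : N%:R * N%:R^-1 ^+ 2 = N%:R^-1 :> R by rewrite expr2 mulrA divff ?gt_eqF // mul1r.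
rewrite e -/A -/C.
have h3 : C < D * N%:R by rewrite -ltr_pdivrMl // mulrC.
have : C * N%:R^-1 < D by rewrite ltr_pdivrMr.
rewrite /D; lra.
Qed.

Lemma Ev_convex : convex_fun (moreau_env l f).
Proof.
move=> x y t /andP[t0 t1].
rewrite !env_fin -!EFinM -EFinD lee_fin.
set m := t *: x + (1 - t) *: y.
have [p Hp] := Hex m.
have h1 := Ev_subgrad (x - m) Hp.
have h2 := Ev_subgrad (y - m) Hp.
have e1 : m + (x - m) = x by rewrite addrC subrK.
have e2 : m + (y - m) = y by rewrite addrC subrK.
rewrite e1 in h1; rewrite e2 in h2.
set G := l^-1 *: (m - p) in h1 h2.
have e : t * dotv G (x - m) + (1 - t) * dotv G (y - m) = 0.
  rewrite -!dotvZr -dotvDr.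
  have -> : t *: (x - m) + (1 - t) *: (y - m) = 0.
    by apply/rowP => i; rewrite /m !mxE; ring.
  by rewrite dotv0r.
have := ler_wpM2l (ltW t0) h1.
have t1' : 0 <= 1 - t by lra.
have := ler_wpM2l t1' h2.
lra.
Qed.
End Mono2.

Section Hull.
Hypothesis flsc : lsc f.
Hypothesis Econv : convex_fun (moreau_env l f).

Definition Fh y := ereal_sup [set ((Ev z) - (2 * l)^-1 * sqnorm (y - z))%:E | z in [set: V]].

Lemma Fh_ge y z : ((Ev z - (2 * l)^-1 * sqnorm (y - z))%:E <= Fh y)%E.
Proof. by apply: ereal_sup_ubound; exists z. Qed.

Lemma Fh_le_f y : (Fh y <= f y)%E.
Proof.
apply: ge_ereal_sup => _ [z _ <-].
have := Ev_le z y; have := fnoo y.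
case: (f y) => [s _| _ _|]; [|by rewrite leey|by rewrite eqxx].
by rewrite -EFinD !lee_fin; lra.
Qed.

Lemma Fh_noo y : Fh y != -oo%E.
Proof.
have := Fh_ge y y; case: (Fh y) => //.
Qed.

Lemma Fh_z0 : Fh z0 != +oo%E.
Proof.
have := Fh_le_f z0; move: fz0; case: (f z0) => // [s|] _; case: (Fh z0) => //.
Qed.

Lemma Fh_lsc : lsc Fh.
Proof.
move=> x a /ereal_sup_gt [_ [z _ <-] hz].
rewrite lte_fin in hz.
have ch : {for x, continuous (fun y : V => Ev z - (2 * l)^-1 * sqnorm (y - z))}.
  exact: (@continuousB _ _ _ (cst (Ev z)) (fun y : V => (2 * l)^-1 * sqnorm (y - z)) x
     (@cst_continuous _ _ _ x)
     (@continuousM _ _ (cst ((2 * l)^-1)) (fun y : V => sqnorm (y - z)) x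
        (@cst_continuous _ _ _ x) (@sqnorm_cont _ _ z x))).
have N := @cvgr_gt _ _ _ _ (fun y : V => Ev z - (2 * l)^-1 * sqnorm (y - z)) _ ch a hz.
near=> y.
apply: lt_le_trans (Fh_ge y z).
rewrite lte_fin; near: y; exact: N.
Unshelve. all: end_near.
Qed.


Lemma Fh_conv : convex_fun Fh.
Proof.
move=> y1 y2 t /andP[t0 t1].
set m := t *: y1 + (1 - t) *: y2.
apply: ge_ereal_sup => _ [z _ <-].
set z1 := z + (y1 - m); set z2 := z + (y2 - m).
have ez : t *: z1 + (1 - t) *: z2 = z by apply/rowP => i; rewrite /z1 /z2 /m !mxE; ring.
have e1 : y1 - z1 = m - z by apply/rowP => i; rewrite /z1 !mxE; ring.
have e2 : y2 - z2 = m - z by apply/rowP => i; rewrite /z2 !mxE; ring.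
have cv := Econv z1 z2 (andb_true_intro (conj t0 t1)).
rewrite ez !env_fin -!EFinM -EFinD lee_fin in cv.
have h1 := Fh_ge y1 z1; have h2 := Fh_ge y2 z2.
rewrite e1 in h1; rewrite e2 in h2.
set Q := (2 * l)^-1 * sqnorm (m - z) in h1 h2 *.
apply: (@le_trans _ _ ((t * (Ev z1 - Q) + (1 - t) * (Ev z2 - Q))%:E)).
  by rewrite lee_fin; lra.
rewrite EFinD !EFinM; apply: leeD; apply: lee_wpmul2l => //; rewrite lee_fin; lra.
Qed.


Lemma lt_sq (d e : R) : 0 < e -> d ^+ 2 < e ^+ 2 -> `|d| < e.
Proof. move=> e0 h; rewrite ltr_norml; apply/andP; split; nra. Qed.

Lemma f_le_Fh p : (f p <= Fh p)%E.
Proof.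
have := Fh_noo p; case Ep: (Fh p) => [r| |]; [move=> _ | by rewrite leey | by rewrite eqxx].
rewrite leNgt; apply/negP => hr.
have [e e0 Be] := (nbhs_ballP _ _).1 (flsc hr).
have C0 : Ev p <= r.
  by have := Fh_ge p p; rewrite Ep subrr /sqnorm dotv0l mulr0 subr0 lee_fin.
set C := r - Ev p.
set K := (2 * l)^-1 + (C + 1) / e ^+ 2.
have e20 : 0 < e ^+ 2 by rewrite exprn_gt0.
have il0 : 0 < (2 * l)^-1 by rewrite invr_gt0 mulr_gt0.
have K1 : (2 * l)^-1 < K by rewrite /K ltrDl divr_gt0 // /C; lra.
have K0 : 0 < K by apply: lt_trans K1.
pose mu := (2 * K)^-1.
have mu0 : 0 < mu by rewrite /mu invr_gt0 mulr_gt0.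
have mul : mu < l.
  have : l^-1 < 2 * K.
    have -> : l^-1 = 2 * (2 * l)^-1 by field; rewrite gt_eqF.
    by rewrite ltr_pM2l.
  rewrite /mu -{2}(invrK l) => h; rewrite ltf_pV2 ?posrE ?invr_gt0 ?mulr_gt0 //.
have mK : (2 * mu)^-1 = K by rewrite /mu; field; rewrite gt_eqF.
have [y Hy] := prox_exists Fh_lsc Fh_z0 (fun y => Fh_ge y p) mu0 mul p.
have := Hy p; rewrite Ep subrr {2}/sqnorm dotv0l mulr0 addr0 mK.
have := Fh_ge y p; have := Fh_noo y.
case Ey: (Fh y) => [Fy| |] //= _; rewrite ?lee_fin -?EFinD ?lee_fin => hlb hub.
set S := sqnorm (y - p) in hlb hub.
have S0 : 0 <= S by exact: sqnorm_ge0.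
have hC : C = r - Ev p by [].
have hS : (C + 1) / e ^+ 2 * S <= C by move: hub; rewrite /K mulrDl; lra.
have hS2 : S < e ^+ 2.
  rewrite ltNge; apply/negP => h.
  have : (C + 1) / e ^+ 2 * e ^+ 2 <= (C + 1) / e ^+ 2 * S.
    by rewrite ler_wpM2l // divr_ge0 // ?ltW // /C; lra.
  rewrite mulrVK ?unitfE ?gt_eqF //; rewrite /C in hS *; lra.
have By : ball p e y.
  split => // i j; rewrite ord1 /ball /=.
  apply: lt_sq => //; apply: le_lt_trans hS2.
  have := sqnorm_coord (y - p) j; rewrite !mxE.
  by have -> : (p ord0 j - y ord0 j) ^+ 2 = (y ord0 j - p ord0 j) ^+ 2 by ring.
have fy := Be _ By.
set w := mu^-1 *: (p - y).
have hw : prox_subdiff mu Fh y w := prox_subdiffP Fh_noo mu0 Fh_z0 Hy.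
have sub := convex_subgrad Fh_noo Fh_conv mu0 hw.
set zq := y + l *: w.
have [q Hq] := Hex zq.
have Eq := EvE Hq.
have fqf := prox_fin fnoo fz0 Hq.
have h1 := Fh_le_f q; have h2 := sub q; have h3 := Fh_ge y zq.
rewrite Ey in h2 h3; rewrite lee_fin in h3.
move: h1 h2; rewrite -(fineK fqf); have := Fh_noo q.
case: (Fh q) => [Fq| |] //= _; rewrite -?EFinD !lee_fin => h1 h2.
set fq := fine (f q) in h1 Eq fy.
have e3 : y - zq = - (l *: w) by apply/rowP => i; rewrite /zq !mxE; ring.
have e4 : q - zq = (q - y) - l *: w by apply/rowP => i; rewrite /zq !mxE; ring.
rewrite e3 sqnormN sqnormZ in h3.
rewrite Eq e4 sqnormB sqnormZ dotvZr in h3.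
rewrite dotvC in h2.
set D := dotv (q - y) w in h2 h3.
have F1 : (2 * l)^-1 * (2 * (l * D)) = D by field; rewrite gt_eqF.
have hq : (2 * l)^-1 * sqnorm (q - y) <= 0.
  rewrite mulrDr mulrBr F1 in h3; lra.
have sq0 : sqnorm (q - y) = 0.
  apply/eqP; rewrite eq_le sqnorm_ge0 andbT.
  by move: hq; rewrite pmulr_rle0.
have qy : q = y by apply/eqP; rewrite -subr_eq0; apply/eqP; exact: sqnorm_eq0.
rewrite qy subrr in h3.
have D0 : D = 0 by rewrite /D qy subrr dotv0l.
have s0 : sqnorm (0 : V) = 0 by rewrite /sqnorm dotv0l.
rewrite D0 s0 in h3.
have KS : 0 <= K * S by rewrite mulr_ge0 // ltW.
move: fy; rewrite -qy -(fineK fqf) lte_fin -/fq; lra.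
Qed.


Lemma hull_conv : convex_fun f.
Proof.
have -> : f = Fh.
  apply/funext => y; apply/eqP; rewrite eq_le; apply/andP; split.
    exact: f_le_Fh.
  exact: Fh_le_f.
exact: Fh_conv.
Qed.

End Hull.
End Env.

Lemma thr_lb (R : realType) n (f : 'rV[R]_n -> \bar R) (l : R) :
  (l%:E < prox_threshold f)%E ->
  exists l' c x0, l < l' /\ forall y, ((c - (2 * l')^-1 * sqnorm (y - x0))%:E <= f y)%E.
Proof.
move=> /ereal_sup_gt [_ [l' [l'0 [x0 hx0]] <-] ll'].
rewrite lte_fin in ll'.
have [c hc] : exists c : R, (c%:E <= moreau_env l' f x0)%E.
  move: hx0; case: (moreau_env l' f x0) => [c| |] // _.
    by exists c.
  by exists 0; rewrite leey.
exists l', c, x0; split => // y.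
have hy : (moreau_env l' f x0 <= f y + ((2 * l')^-1 * sqnorm (y - x0))%:E)%E.
  by apply: ereal_inf_lbound; exists y.
have := le_trans hc hy.
case: (f y) => [s| |]; rewrite ?leey //.
by rewrite -EFinD !lee_fin; lra.
Qed.

Unset Implicit Arguments.
Set Strict Implicit.

Theorem mainTheorem3 (R : realType) (n : nat) (f : 'rV[R]_n -> \bar R) (l : R) :
  proper_fun f -> lsc f -> prox_bounded f -> (0 < prox_threshold f)%E ->
  0 < l -> (l%:E < prox_threshold f)%E ->
  [<-> firmly_nonexpansive (prox_map l f);
       monotone_op (prox_subdiff l f);
       maximally_monotone (prox_subdiff l f);
       convex_fun (moreau_env l f);
       convex_fun f].
Proof.
move=> [fnoo [z0 fz0]] flsc _ _ l0 lthr.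
have [l' [c [x0 [ll' flb]]]] := thr_lb lthr.
have Hex : forall x, exists p, prox_map l f x p := prox_exists flsc fz0 flb l0 ll'.

tfae.
- move=> H; exact: (@fne_mono _ _ f fnoo l l0 H).
- move=> Hm; split => // S Smono sub x.
  apply/seteqP; split; last exact: sub.
  move=> u Su.
  have [y Hy] := Hex (x + l *: u).
  have Hw := prox_subdiffP fnoo l0 fz0 Hy.
  have Sw := sub _ _ Hw.
  have := Smono _ _ _ _ Su Sw.
  have -> : u - l^-1 *: (x + l *: u - y) = l^-1 *: (y - x).
    by apply/rowP => i; rewrite !mxE; field; rewrite gt_eqF.
  rewrite dotvZl pmulr_rge0 ?invr_gt0 //.
  have -> : x - y = - (y - x) by rewrite opprB.
  rewrite dotvNr oppr_ge0 => h.
  have : sqnorm (y - x) = 0 by apply/eqP; rewrite eq_le h sqnorm_ge0.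
  move/sqnorm_eq0/eqP; rewrite subr_eq0 => /eqP yx.
  move: Hw; rewrite yx.
  by have -> : l^-1 *: (x + l *: u - x) = u by apply/rowP => i; rewrite !mxE; field; rewrite gt_eqF.
- by move=> [Hm _]; exact: (Ev_convex fnoo fz0 l0 Hex Hm).
- exact: (hull_conv fnoo fz0 l0 Hex flsc).
- move=> Hc; apply: (mono_fne fnoo l0 fz0).
  exact: conv_mono fnoo Hc l l0.
Qed.
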